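(* If $A,B,C,X$ are $N\times N$ real symmetric positive semidefinite matrices, then \[ \det(A+X)+\det(B+X)+\det(C+X)+\det(A+B+C+X)\geq\det(A+B+X)+\det(B+C+X)+\det(C+A+X)+\det X. \] *)

(* Defs.v *)
From mathcomp Require Import all_boot all_order all_algebra.
From mathcomp Require Import reals.
Set Implicit Arguments. Unset Strict Implicit. Unset Printing Implicit Defensive.
Import GRing.Theory Num.Theory.
Local Open Scope ring_scope.

Definition psd (R : realType) (N : nat) (A : 'M[R]_N) : Prop :=
  A^T = A /\ forall x : 'rV[R]_N, 0 <= (x *m A *m x^T) ord0 ord0.

(* Main.v *)
Require Import Defs.
From mathcomp Require Import all_boot all_order all_algebra perm ring lra.
From mathcomp Require Import reals.
Set Implicit Arguments. Unset Strict Implicit. Unset Printing Implicit Defensive.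
Import Order.TTheory GRing.Theory Num.Theory.
Local Open Scope ring_scope.

Section Gen.
Variables (R : comNzRingType) (N : nat) (K : finType) (w : K -> 'I_N -> R).

Definition Gmx (d : K -> R) : 'M[R]_N := \matrix_(i, j) \sum_k d k * w k i * w k j.
Definition Wk (f : {ffun 'I_N -> K}) : 'M[R]_N := \matrix_(i, j) w (f i) j.
Definition cf (f : {ffun 'I_N -> K}) : R := (\prod_i w (f i) i) * \det (Wk f).

Lemma det_Gmx d : \det (Gmx d) = \sum_(f : {ffun 'I_N -> K}) (\prod_i d (f i)) * cf f.
Proof.
rewrite /determinant /Gmx.
under eq_bigr => s _ do under eq_bigr => i _ do rewrite mxE.
under eq_bigr => s _ do rewrite bigA_distr_bigA mulr_sumr.
rewrite exchange_big /=; apply: eq_bigr => f _.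
rewrite /cf /determinant mulr_sumr mulr_sumr; apply: eq_bigr => s _.
rewrite !big_split /=.
rewrite /Wk; have -> : \prod_i (\matrix_(i0, j) w (f i0) j : 'M[R]_N) i (s i) = \prod_i w (f i) (s i) by apply: eq_bigr => i _; rewrite mxE.
by rewrite mulrCA !mulrA.
Qed.

Lemma sym_sum (h : {ffun 'I_N -> K} -> R) :
  (forall (f : {ffun 'I_N -> K}) (s : 'S_N), h [ffun i => f (s i)] = h f) ->
  (N`!)%:R * \sum_(f : {ffun 'I_N -> K}) h f * cf f = \sum_(f : {ffun 'I_N -> K}) h f * (\det (Wk f)) ^+ 2.
Proof.
move=> hinv.
have -> : (N`!)%:R * \sum_(f : {ffun 'I_N -> K}) h f * cf f = \sum_(s : 'S_N) \sum_(f : {ffun 'I_N -> K}) h f * cf f.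
  by rewrite sumr_const card_Sn mulr_natl.
have e : forall s : 'S_N, \sum_(f : {ffun 'I_N -> K}) h f * cf f = \sum_(f : {ffun 'I_N -> K}) h [ffun i => f (s i)] * cf [ffun i => f (s i)].
  move=> s; apply: reindex_inj => f g /ffunP eq; apply/ffunP => i.
  by have := eq (s^-1 i)%g; rewrite !ffunE permKV.
under eq_bigr => s _ do rewrite (e s).
rewrite exchange_big /=; apply: eq_bigr => f _.
under eq_bigr => s _ do rewrite (hinv f s).
rewrite -mulr_sumr; congr (_ * _).
have dW : forall s : 'S_N, \det (Wk [ffun i => f (s i)]) = (-1) ^+ s * \det (Wk f).
  move=> s; rewrite -det_perm -det_mulmx -row_permE; congr (\det _).
  by apply/matrixP => i j; rewrite !mxE ffunE.
under eq_bigr => s _ do rewrite /cf (dW s).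
have -> : \det (Wk f) ^+ 2 = \det (Wk f)^T * \det (Wk f) by rewrite det_tr expr2.
rewrite [X in _ = X * _]/determinant mulr_suml.
apply: eq_bigr => s _.
rewrite (eq_bigr (fun i => (Wk f)^T i (s i))); last by move=> i _; rewrite !mxE ffunE.
by rewrite mulrCA mulrA.
Qed.
End Gen.

Section Gram.
Variable R : realType.

Lemma qf_expand n (x : 'rV[R]_n) (A : 'M_n) :
  (x *m A *m x^T) 0 0 = \sum_i \sum_j x 0 i * A i j * x 0 j.
Proof.
rewrite !mxE exchange_big /=; apply: eq_bigr => j _.
rewrite !mxE mulr_suml; apply: eq_bigr => i _; by rewrite ?mxE.
Qed.

Definition ext n (t : R) (y : 'rV[R]_n) : 'rV[R]_n.+1 :=
  \row_k (if unlift ord0 k is Some j then y 0 j else t).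
Definition subA n (A : 'M[R]_n.+1) : 'M[R]_n := \matrix_(i, j) A (lift ord0 i) (lift ord0 j).

Lemma qsplit n (A : 'M[R]_n.+1) t y :
  (ext t y *m A *m (ext t y)^T) 0 0 =
  t * t * A ord0 ord0 + t * (\sum_j A ord0 (lift ord0 j) * y 0 j)
   + t * (\sum_i y 0 i * A (lift ord0 i) ord0) + (y *m subA A *m y^T) 0 0.
Proof.
rewrite !qf_expand.
under eq_bigr => i _ do rewrite big_ord_recl.
rewrite big_ord_recl.
have e0 : ext t y 0 ord0 = t by rewrite mxE unlift_none.
have e1 : forall j, ext t y 0 (lift ord0 j) = y 0 j by move=> j; rewrite mxE liftK.
rewrite big_split /= !e0.
rewrite -!addrA; congr (_ + (_ + (_ + _))).
- by rewrite mulrAC.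
- by rewrite mulr_sumr; apply: eq_bigr => j _; rewrite e1 mulrA.
- by rewrite mulr_sumr; apply: eq_bigr => j _; rewrite e1 mulrC.
- by apply: eq_bigr => i _; apply: eq_bigr => j _; rewrite !e1 mxE.
Qed.


Lemma psd_gram n (A : 'M[R]_n) : psd A -> exists L : 'M[R]_n, A = L^T *m L.
Proof.
elim: n A => [|n IH] A [sym pos].
  by exists 0; apply/matrixP => [[]].
have symE : forall i j, A j i = A i j by move=> i j; rewrite -{1}sym mxE.
set a := A ord0 ord0.
pose b := fun j : 'I_n => A ord0 (lift ord0 j).
pose be := fun y : 'rV[R]_n => \sum_j b j * y 0 j.
pose q := fun y : 'rV[R]_n => (y *m subA A *m y^T) 0 0.
have Q : forall t y, (ext t y *m A *m (ext t y)^T) 0 0 = t * t * a + 2 * t * be y + q y.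
  move=> t y; rewrite qsplit.
  have -> : \sum_i y 0 i * A (lift ord0 i) ord0 = be y.
    by apply: eq_bigr => i _; rewrite symE mulrC.
  rewrite /be /b /q /a; ring.
have q0 : forall y, 0 <= q y.
  move=> y; have := pos (ext 0 y); by rewrite Q !(mul0r, mulr0) !add0r.
have a0 : 0 <= a.
  have := pos (ext 1 0); rewrite Q mul1r mulr1.
  have -> : be 0 = 0 by apply: big1 => j _; rewrite mxE mulr0.
  have -> : q 0 = 0 by rewrite /q !mul0mx mxE.
  by rewrite mulr0 !addr0 mul1r.
have beq0 : a = 0 -> forall y, be y = 0.
  move=> az y; apply/eqP; apply/negPn/negP => nz.
  have := pos (ext (- (q y + 1) / (2 * be y)) y); rewrite Q az mulr0 add0r.
  have -> : 2 * (- (q y + 1) / (2 * be y)) * be y = - (q y + 1).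
    by field.
  have := q0 y; lra.
have bq0 : a = 0 -> forall j, b j = 0.
  move=> az j; have := beq0 az (\row_k (k == j)%:R).
  rewrite /be (bigD1 j) //= big1 ?addr0 ?mxE ?eqxx ?mulr1 //.
  by move=> k kj; rewrite mxE (negbTE kj) mulr0.
pose D := \matrix_(i, j) (subA A i j - b i * b j / a).
have QD : forall y, (y *m D *m y^T) 0 0 = q y - be y * be y / a.
  move=> y; rewrite /q !qf_expand /be big_distrlr /= mulr_suml -sumrB.
  apply: eq_bigr => i _; rewrite mulr_suml -sumrB.
  apply: eq_bigr => j _; rewrite !mxE; ring.
have psdD : psd D.
  split.
    by apply/matrixP => i j; rewrite !mxE symE [b j * _]mulrC.
  move=> y; rewrite QD.
  have [az|anz] := eqVneq a 0.
    by rewrite az invr0 mulr0 subr0.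
  have := pos (ext (- (be y / a)) y); rewrite Q.
  have -> : - (be y / a) * - (be y / a) * a + 2 * - (be y / a) * be y + q y
     = q y - be y * be y / a by field.
  done.
have [M DM] := IH D psdD.
have DM' : forall i j, D i j = \sum_r M r i * M r j.
  by move=> i j; rewrite DM mxE; apply: eq_bigr => r _; rewrite mxE.
pose s := Num.sqrt a.
have ss : s * s = a by rewrite -expr2 sqr_sqrtr.
exists (\matrix_(r, k) match unlift ord0 r with
   | Some r' => (match unlift ord0 k with Some k' => M r' k' | None => 0 end)
   | None => (match unlift ord0 k with Some k' => b k' / s | None => s end) end).
apply/matrixP => i j; rewrite mxE big_ord_recl.
under eq_bigr => r _ do rewrite !mxE liftK.
rewrite !mxE unlift_none.
have [az|anz] := eqVneq a 0.
  have s0 : s = 0 by rewrite /s az sqrtr0.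
  case: (unliftP ord0 i) => [i'|] ->; case: (unliftP ord0 j) => [j'|] -> ;
    rewrite ?liftK ?unlift_none /=.
  - have := DM' i' j'; rewrite mxE => <-.
    by rewrite s0 invr0 !mulr0 add0r az invr0 mulr0 subr0 mxE.
  - rewrite (symE ord0 (lift ord0 i')) -/(b i') (bq0 az i') s0 ?mulr0 ?mul0r add0r.
    by rewrite big1 // => r _; rewrite mulr0.
  - rewrite -/(b j') (bq0 az j') s0 ?mulr0 ?mul0r add0r.
    by rewrite big1 // => r _; rewrite mul0r.
  - by rewrite ss big1 ?addr0 // => r _; rewrite mulr0.
have snz : s != 0 by apply: contra anz => /eqP s0; rewrite -ss s0 mulr0.
case: (unliftP ord0 i) => [i'|] ->; case: (unliftP ord0 j) => [j'|] -> ;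
  rewrite ?liftK ?unlift_none /=.
- have := DM' i' j'; rewrite mxE => <-.
  have -> : b i' / s * (b j' / s) = b i' * b j' / a by rewrite mulrACA -invfM ss.
  rewrite /b mxE; ring.
- rewrite (symE ord0 (lift ord0 i')) -/(b i') divfK //.
  by rewrite big1 ?addr0 // => r _; rewrite mulr0.
- rewrite -/(b j') mulrC divfK //.
  by rewrite big1 ?addr0 // => r _; rewrite mul0r.
- by rewrite ss big1 ?addr0 // => r _; rewrite mulr0.
Qed.

End Gram.

Section Main.
Variables (R : realType) (N : nat) (Lx La Lb Lc : 'M[R]_N).

Definition Ls (p : 'I_4) : 'M[R]_N :=
  match val p with 0 => Lx | 1 => La | 2 => Lb | _ => Lc end.
Definition ww (k : 'I_4 * 'I_N) (j : 'I_N) : R := Ls k.1 k.2 j.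
Definition ee (P : nat) (k : 'I_4 * 'I_N) : R := (val k.1 == P)%:R.
Definition dw (sA sB sC : bool) (k : 'I_4 * 'I_N) : R :=
  (if sA then 1 else 1 - ee 1 k) * (if sB then 1 else 1 - ee 2 k) * (if sC then 1 else 1 - ee 3 k).
Definition gs (P : 'M[R]_N) i j := \sum_r P r i * P r j.

Lemma gram_entry (P : 'M[R]_N) i j : (P^T *m P) i j = gs P i j.
Proof. by rewrite mxE; apply: eq_bigr => r _; rewrite mxE. Qed.

Lemma gsc c (P : 'M[R]_N) i j : \sum_r c * P r i * P r j = c * gs P i j.
Proof. by rewrite /gs mulr_sumr; apply: eq_bigr => r _; rewrite mulrA. Qed.

Lemma Gdw sA sB sC i j : Gmx ww (dw sA sB sC) i j =
  (if sA then gs La i j else 0) + (if sB then gs Lb i j else 0)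
  + (if sC then gs Lc i j else 0) + gs Lx i j.
Proof.
rewrite mxE -(pair_big xpredT xpredT (fun p r => dw sA sB sC (p, r) * ww (p, r) i * ww (p, r) j)) /=.
rewrite !big_ord_recl big_ord0 /dw /ee /ww /Ls /gs /=.
rewrite !subr0 !subrr !gsc /gs.
by case: sA; case: sB; case: sC => /=; ring.
Qed.

Definition yy (P : nat) (f : {ffun 'I_N -> 'I_4 * 'I_N}) : R := \prod_i (1 - ee P (f i)).

Lemma prodE sA sB sC (f : {ffun 'I_N -> 'I_4 * 'I_N}) :
  \prod_i dw sA sB sC (f i) =
  (if sA then 1 else yy 1 f) * (if sB then 1 else yy 2 f) * (if sC then 1 else yy 3 f).
Proof.
rewrite /dw !big_split /=.
by case: sA; case: sB; case: sC; rewrite /= ?big1_eq.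
Qed.

Lemma addE (P Q : 'M[R]_N) i j : (P + Q) i j = P i j + Q i j.
Proof. by rewrite mxE. Qed.

Lemma yy_perm P (f : {ffun 'I_N -> 'I_4 * 'I_N}) (s : 'S_N) :
  yy P [ffun i => f (s i)] = yy P f.
Proof.
rewrite /yy [RHS](reindex_inj (@perm_inj _ s)) /=.
by apply: eq_bigr => i _; rewrite ffunE.
Qed.

Lemma yy_ge0 P f : 0 <= 1 - yy P f.
Proof.
rewrite subr_ge0 /yy; apply: prodr_ile1 => i _.
by rewrite /ee; case: (_ == _); rewrite /= ?subrr ?subr0 ?lexx ?ler01.
Qed.

Lemma ineq_gram :
  \det (La^T *m La + Lx^T *m Lx) + \det (Lb^T *m Lb + Lx^T *m Lx)
  + \det (Lc^T *m Lc + Lx^T *m Lx) + \det (La^T *m La + Lb^T *m Lb + Lc^T *m Lc + Lx^T *m Lx)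
  >= \det (La^T *m La + Lb^T *m Lb + Lx^T *m Lx) + \det (Lb^T *m Lb + Lc^T *m Lc + Lx^T *m Lx)
  + \det (Lc^T *m Lc + La^T *m La + Lx^T *m Lx) + \det (Lx^T *m Lx).
Proof.
set A := La^T *m La; set B := Lb^T *m Lb; set C := Lc^T *m Lc; set X := Lx^T *m Lx.
have G : forall sA sB sC, Gmx ww (dw sA sB sC) =
   (if sA then A else 0) + (if sB then B else 0) + (if sC then C else 0) + X.
  move=> sA sB sC; apply/matrixP => i j; rewrite Gdw.
  by case: sA; case: sB; case: sC; rewrite /= !addE /A /B /C /X !gram_entry ?mxE.
have -> : A + X = Gmx ww (dw true false false) by rewrite G !addr0.
have -> : B + X = Gmx ww (dw false true false) by rewrite G add0r addr0.
have -> : C + X = Gmx ww (dw false false true) by rewrite G !add0r.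
have -> : A + B + C + X = Gmx ww (dw true true true) by rewrite G.
have -> : A + B + X = Gmx ww (dw true true false) by rewrite G addr0.
have -> : B + C + X = Gmx ww (dw false true true) by rewrite G add0r.
have -> : C + A + X = Gmx ww (dw true false true) by rewrite G addr0 [C + A]addrC.
have -> : X = Gmx ww (dw false false false) by rewrite G !add0r.
rewrite -subr_ge0 !det_Gmx.
pose H := fun f : {ffun 'I_N -> 'I_4 * 'I_N} => (1 - yy 1 f) * (1 - yy 2 f) * (1 - yy 3 f).
have -> : forall a1 a2 a3 a4 b1 b2 b3 b4 : {ffun 'I_N -> 'I_4 * 'I_N} -> R,
   \sum_(f : {ffun 'I_N -> 'I_4 * 'I_N}) a1 f + \sum_(f : {ffun 'I_N -> 'I_4 * 'I_N}) a2 f + \sum_(f : {ffun 'I_N -> 'I_4 * 'I_N}) a3 f + \sum_(f : {ffun 'I_N -> 'I_4 * 'I_N}) a4 f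
   - (\sum_(f : {ffun 'I_N -> 'I_4 * 'I_N}) b1 f + \sum_(f : {ffun 'I_N -> 'I_4 * 'I_N}) b2 f + \sum_(f : {ffun 'I_N -> 'I_4 * 'I_N}) b3 f + \sum_(f : {ffun 'I_N -> 'I_4 * 'I_N}) b4 f)
   = \sum_(f : {ffun 'I_N -> 'I_4 * 'I_N}) (a1 f + a2 f + a3 f + a4 f - (b1 f + b2 f + b3 f + b4 f)).
  by move=> *; rewrite sumrB !big_split.
have -> : \sum_(f : {ffun 'I_N -> 'I_4 * 'I_N}) (\prod_i dw true false false (f i) * cf ww f +
     \prod_i dw false true false (f i) * cf ww f +
     \prod_i dw false false true (f i) * cf ww f +
     \prod_i dw true true true (f i) * cf ww f -
     (\prod_i dw true true false (f i) * cf ww f +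
      \prod_i dw false true true (f i) * cf ww f +
      \prod_i dw true false true (f i) * cf ww f +
      \prod_i dw false false false (f i) * cf ww f))
   = \sum_(f : {ffun 'I_N -> 'I_4 * 'I_N}) H f * cf ww f.
  by apply: eq_bigr => f _; rewrite !prodE /H /=; ring.
rewrite -(@pmulr_rge0 _ (N`!)%:R); last by rewrite ltr0n fact_gt0.
rewrite sym_sum; last by move=> f s; rewrite /H !yy_perm.
apply: sumr_ge0 => f _; apply: mulr_ge0; last by rewrite sqr_ge0.
by rewrite /H !mulr_ge0 ?yy_ge0.
Qed.

End Main.

Unset Implicit Arguments.

Theorem lemma5p5 (R : realType) (N : nat) (A B C X : 'M[R]_N) :
  psd A -> psd B -> psd C -> psd X ->
  \det (A + X) + \det (B + X) + \det (C + X) + \det (A + B + C + X)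
  >= \det (A + B + X) + \det (B + C + X) + \det (C + A + X) + \det X.
Proof.
move=> /psd_gram [La ->] /psd_gram [Lb ->] /psd_gram [Lc ->] /psd_gram [Lx ->].
exact: (ineq_gram Lx La Lb Lc).
Qed.
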